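(* Consider the two-sided GTRS $$\min_{\bm x \in \mathbb{R}^n} \left\{ \bm x^{\top} \bm Q_0 \bm x + \bm q_0^{\top} \bm x + b : b_1^l\le \bm x^{\top} \bm Q_1 \bm x + \bm q_1^{\top} \bm x \le b_1^u \right\},$$ written in matrix form as $\min_{\bm X\in\mathcal{X}}\{\langle \bm A_0,\bm X\rangle : b_1^l\le\langle \bm A_1,\bm X\rangle\le b_1^u,\ X_{11}=1\}$ with $\mathcal{X}:=\{\bm X\in \mathbb{S}_+^{n+1}: \operatorname{rank}(\bm X)\le 1\}$, $\bm A_0 = \begin{pmatrix} b & \bm q_0^{\top}/2\\ \bm q_0/2 & \bm Q_0\end{pmatrix}$, $\bm A_1 = \begin{pmatrix} 0 & \bm q_1^{\top}/2\\ \bm q_1/2 & \bm Q_1\end{pmatrix}$. Let $$\mathcal{C}:=\left\{\bm X\in \mathbb{S}_+^{n+1}: \operatorname{rank}(\bm X)\le 1,\ X_{11}=1,\ b_1^l \le \langle\bm A_1, \bm X\rangle \le b_1^u \right\},\quad \mathcal{C}_{\mathrm{rel}}:=\left\{\bm X\in \mathbb{S}_+^{n+1}: X_{11}=1,\ b_1^l \le \langle\bm A_1, \bm X\rangle \le b_1^u \right\}$$ be the feasible sets of the problem and of its Dantzig-Wolfe relaxation. Then (i) extreme point exactness holds: every extreme point of $\mathcal{C}_{\mathrm{rel}}$ belongs to $\mathcal{C}$; (ii) if $\bm Q_1 \neq \bm 0$ and $-\infty < b_1^l \le b_1^u < +\infty$, convex hull exactness holds: $\mathcal{C}_{\mathrm{rel}}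 = \operatorname{cl}\operatorname{conv}(\mathcal{C})$.
   Context: $\bm Q_0,\bm Q_1$ are symmetric (possibly indefinite) matrices, $-\infty\le b_1^l\le b_1^u\le+\infty$, and the Dantzig-Wolfe relaxation replaces $\mathcal{X}$ by its closed convex hull $\mathbb{S}_+^{n+1}$. $\operatorname{cl}\operatorname{conv}$ denotes the closed convex hull. *)

(* Defs.v *)
From HB Require Import structures.
From mathcomp Require Import all_boot all_order all_algebra.
From mathcomp Require Import all_classical all_reals all_analysis.
Set Implicit Arguments. Unset Strict Implicit. Unset Printing Implicit Defensive.
Import Order.TTheory GRing.Theory Num.Theory.
Import numFieldNormedType.Exports.
Local Open Scope classical_set_scope.
Local Open Scope ring_scope.

Definition psd (R : realType) (m : nat) (X : 'M[R]_m) : Prop :=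
  X^T = X /\ forall x : 'cV[R]_m, 0 <= (x^T *m X *m x) ord0 ord0.

Definition frob (R : realType) (m : nat) (A X : 'M[R]_m) : R := \tr (A^T *m X).

Definition A1mx (R : realType) (n : nat) (Q1 : 'M[R]_n) (q1 : 'cV[R]_n)
  : 'M[R]_(1 + n) :=
  block_mx (0 : 'M[R]_1) ((2%:R)^-1 *: q1^T) ((2%:R)^-1 *: q1) Q1.

Definition Cset (R : realType) (n : nat) (Q1 : 'M[R]_n) (q1 : 'cV[R]_n)
  (bl bu : \bar R) : set 'M[R]_(1 + n) :=
  [set X | psd X /\ (\rank X <= 1)%N /\ X ord0 ord0 = 1 /\
     (bl <= (frob (A1mx Q1 q1) X)%:E)%E /\ ((frob (A1mx Q1 q1) X)%:E <= bu)%E].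

Definition Crel (R : realType) (n : nat) (Q1 : 'M[R]_n) (q1 : 'cV[R]_n)
  (bl bu : \bar R) : set 'M[R]_(1 + n) :=
  [set X | psd X /\ X ord0 ord0 = 1 /\
     (bl <= (frob (A1mx Q1 q1) X)%:E)%E /\ ((frob (A1mx Q1 q1) X)%:E <= bu)%E].

Definition extreme_point (R : realType) (m : nat) (S : set 'M[R]_m) (X : 'M[R]_m)
  : Prop :=
  S X /\ forall (Y Z : 'M[R]_m) (t : R), S Y -> S Z -> 0 < t -> t < 1 ->
    X = t *: Y + (1 - t) *: Z -> Y = X /\ Z = X.

Definition conv_hull (R : realType) (m : nat) (S : set 'M[R]_m) : set 'M[R]_m :=
  [set X | exists (k : nat) (w : 'I_k -> R) (P : 'I_k -> 'M[R]_m),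
     (forall i, 0 <= w i) /\ \sum_(i < k) w i = 1 /\ (forall i, S (P i)) /\
     X = \sum_(i < k) w i *: P i].

(* Main.v *)
Require Import Defs.
From HB Require Import structures.
From mathcomp Require Import all_boot all_order all_algebra.
From mathcomp Require Import all_classical all_reals all_analysis.
From mathcomp Require Import ring lra zify.
Set Implicit Arguments. Unset Strict Implicit. Unset Printing Implicit Defensive.
Import Order.TTheory GRing.Theory Num.Theory.
Import numFieldNormedType.Exports.
Local Open Scope classical_set_scope.
Local Open Scope ring_scope.


Section Basic.
Variable R : realType.
Variable m : nat.
Implicit Types (B X Y : 'M[R]_m) (z a b : 'cV[R]_m).

Definition bf B a b : R := (a^T *m B *m b) ord0 ord0.
Definition qf B z : R := bf B z z.

Lemma bfE B a b : bf B a b = \sum_i \sum_j a i ord0 * B i j * b j ord0.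
Proof.
rewrite /bf mxE; under eq_bigr do rewrite mxE big_distrl.
rewrite exchange_big; apply: eq_bigr => i _; apply: eq_bigr => j _.
by rewrite !mxE.
Qed.

Lemma bfDl B a b c : bf B (a + b) c = bf B a c + bf B b c.
Proof. by rewrite /bf linearD /= !mulmxDl mxE. Qed.
Lemma bfDr B a b c : bf B c (a + b) = bf B c a + bf B c b.
Proof. by rewrite /bf !mulmxDr mxE. Qed.
Lemma bfZl B k a c : bf B (k *: a) c = k * bf B a c.
Proof. by rewrite /bf linearZ /= -!scalemxAl mxE. Qed.
Lemma bfZr B k a c : bf B c (k *: a) = k * bf B c a.
Proof. by rewrite /bf -!scalemxAr mxE. Qed.
Lemma bfNl B a c : bf B (- a) c = - bf B a c.
Proof. by rewrite -scaleN1r bfZl mulN1r. Qed.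
Lemma bfNr B a c : bf B c (- a) = - bf B c a.
Proof. by rewrite -scaleN1r bfZr mulN1r. Qed.
Lemma bfBl B a b c : bf B (a - b) c = bf B a c - bf B b c.
Proof. by rewrite bfDl bfNl. Qed.
Lemma bfBr B a b c : bf B c (a - b) = bf B c a - bf B c b.
Proof. by rewrite bfDr bfNr. Qed.
Lemma bf_sym B a b : B^T = B -> bf B a b = bf B b a.
Proof.
move=> hB; rewrite /bf -[in RHS](trmxK (b^T *m B *m a)) [in RHS]mxE.
by rewrite !trmx_mul trmxK hB mulmxA.
Qed.
Lemma bfD_mx B1 B2 a b : bf (B1 + B2) a b = bf B1 a b + bf B2 a b.
Proof. by rewrite /bf mulmxDr mulmxDl mxE. Qed.
Lemma bfZ_mx k B a b : bf (k *: B) a b = k * bf B a b.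
Proof. by rewrite /bf -scalemxAr -scalemxAl mxE. Qed.

Definition frob' B X := \tr (B^T *m X).

Lemma frob_oprod B z : \tr (B^T *m (z *m z^T)) = qf B z.
Proof.
rewrite mulmxA mxtrace_mulC /qf /bf.
rewrite /mxtrace big_ord1.
rewrite -[in RHS](trmxK (z^T *m B *m z)) [in RHS]mxE.
by rewrite !trmx_mul trmxK mulmxA.
Qed.

End Basic.

Section Psd.
Variable R : realType.
Variable m : nat.
Implicit Types (B X Y : 'M[R]_m) (z a b w x : 'cV[R]_m).

Definition ev (i : 'I_m) : 'cV[R]_m := delta_mx i ord0.

Lemma bf_ev B i j : bf B (ev i) (ev j) = B i j.
Proof. by rewrite /bf /ev trmx_delta -rowE -colE !mxE. Qed.

Lemma oprodE w i j : (w *m w^T) i j = w i ord0 * w j ord0.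
Proof. by rewrite mxE big_ord1 mxE. Qed.

Definition ip a b : R := (a^T *m b) ord0 ord0.

Lemma qf_oprod w x : qf (w *m w^T) x = ip x w ^+ 2.
Proof.
rewrite /qf /bf /ip !mulmxA -(mulmxA (x^T *m w)) mxE big_ord1 expr2; congr (_ * _).
by rewrite -[w^T *m x]trmxK mxE trmx_mul trmxK.
Qed.

Lemma ip_col B x j : ip x (B *m ev j) = bf B x (ev j).
Proof. by rewrite /ip /bf mulmxA. Qed.

Lemma psd_qf X : psd X -> forall x, 0 <= qf X x.
Proof. by case. Qed.

Lemma psd_diag X i : psd X -> 0 <= X i i.
Proof. by move=> [_ h]; rewrite -bf_ev; apply: h. Qed.

Lemma psd_offdiag0 X i j : psd X -> X j j = 0 -> X i j = 0.
Proof.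
move=> hX hjj; have [hs hq] := hX.
have hji : X j i = X i j by rewrite -{1}hs mxE.
have hii := psd_diag i hX.
set s := - X i j / (X i i + 1).
have := hq (s *: ev i + ev j).
rewrite -/(bf X _ _) bfDl !bfDr !bfZl !bfZr !bf_ev hjj hji.
move=> h.
have hpos : 0 < X i i + 1 by lra.
have hne : X i i + 1 != 0 by rewrite gt_eqF.
have e : (X i i + 1)^+2 * (s * (s * X i i) + s * X i j + (s * X i j + 0))
   = - X i j ^+ 2 * (X i i + 2) by rewrite /s; field.
have h1 : 0 <= (X i i + 1)^+2 * (s * (s * X i i) + s * X i j + (s * X i j + 0)).
  by apply: mulr_ge0 => //; apply: sqr_ge0.
rewrite e in h1.
have h3 : X i j ^+ 2 <= 0 by nra.
by apply/eqP; rewrite -sqrf_eq0; apply/eqP; apply: le_anti; rewrite h3 sqr_ge0.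
Qed.


Lemma mxsubE (A B : 'M[R]_m) i j : (A - B) i j = A i j - B i j.
Proof. by rewrite !mxE. Qed.

Lemma ipZr x k a : ip x (k *: a) = k * ip x a.
Proof. by rewrite /ip -scalemxAr mxE. Qed.

Lemma bfB_mx B1 B2 a b : bf (B1 - B2) a b = bf B1 a b - bf B2 a b.
Proof. by rewrite bfD_mx -scaleN1r bfZ_mx mulN1r. Qed.

Lemma psd_decomp_k k : forall X, psd X ->
  (forall i j : 'I_m, (k <= j)%N -> X i j = 0) ->
  exists ws : seq 'cV[R]_m, X = \sum_(w <- ws) w *m w^T.
Proof.
elim: k => [|k IH] X hX hk.
  exists [::]; rewrite big_nil; apply/matrixP => i j; rewrite mxE; exact: hk.
have [km|mk] := ltnP k m; last first.
  apply: IH => // i j kj; have := ltn_ord j; lia.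
set j0 := Ordinal km.
have [hs hq] := hX.
have hsym : forall i j, X j i = X i j by move=> i j; rewrite -{1}hs mxE.
have [h0|hn] := eqVneq (X j0 j0) 0.
  apply: IH => // i j kj; have [kj'|] := ltnP k j; first exact: hk.
  move=> jk; have -> : j = j0 by apply: val_inj => /=; lia.
  exact: psd_offdiag0.
have hpos : 0 < X j0 j0 by rewrite lt0r hn psd_diag.
set w := (Num.sqrt (X j0 j0))^-1 *: (X *m ev j0).
have hsq : Num.sqrt (X j0 j0) ^+ 2 = X j0 j0 by rewrite sqr_sqrtr // ltW.
have hsq0 : Num.sqrt (X j0 j0) != 0 by rewrite sqrtr_eq0 -ltNge.
have wE : forall i, w i ord0 = (Num.sqrt (X j0 j0))^-1 * X i j0.
  by move=> i; rewrite /w /ev mxE -colE !mxE.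
have wwE : forall i j, (w *m w^T) i j = X i j0 * X j j0 / X j0 j0.
  move=> i j; rewrite oprodE !wE -[in RHS]hsq; field; exact: hsq0.
set X' := X - w *m w^T.
have hX' : psd X'.
  split; first by rewrite /X' linearB /= trmx_mul trmxK hs.
  move=> x; have -> : (x^T *m X' *m x) ord0 ord0 = qf X' x by [].
  rewrite /X' /qf bfB_mx (_ : bf (w *m w^T) x x = qf (w *m w^T) x) // qf_oprod.
  rewrite /w ipZr ip_col.
  set t := bf X x (ev j0) / X j0 j0.
  have := hq (x - t *: ev j0); rewrite -/(bf _ _ _).
  rewrite !bfBl !bfBr !bfZl !bfZr bf_ev => h.
  move: h; rewrite /t (bf_sym (ev j0) x hs) => h.
  rewrite exprMn exprVn hsq.
  apply: (le_trans h); rewrite le_eqVlt; apply/orP; left; apply/eqP.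
  by field; rewrite gt_eqF.
have [ws hws] : exists ws : seq 'cV[R]_m, X' = \sum_(w <- ws) w *m w^T.
  apply: IH => // i j kj; rewrite /X' mxsubE wwE.
  have [kj'|] := ltnP k j.
    have h1 : X i j = 0 := hk i j kj'.
    have h2 : X j j0 = 0 by rewrite hsym; exact: hk.
    by rewrite h1 h2 mulr0 mul0r subr0.
  move=> jk; have -> : j = j0 by apply: val_inj => /=; lia.
  by field; rewrite gt_eqF.
exists (w :: ws); by rewrite big_cons -hws /X' addrC subrK.
Qed.

Lemma psd_decomp X : psd X -> exists ws : seq 'cV[R]_m, X = \sum_(w <- ws) w *m w^T.
Proof. move=> hX; apply: (psd_decomp_k (k := m)) => // i j; have := ltn_ord j; lia. Qed.

End Psd.

Section YZ.
Variable R : realType.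
Variable m : nat.
Implicit Types (B X Y : 'M[R]_m) (z a b w x u v : 'cV[R]_m).

Lemma qf_tr B z : qf B z = \tr (B^T *m (z *m z^T)).
Proof. by rewrite frob_oprod. Qed.

Lemma qfN B z : qf (- B) z = - qf B z.
Proof. by rewrite /qf -scaleN1r bfZ_mx mulN1r. Qed.

Lemma sum_neg_ex (T : eqType) (s : seq T) (F : T -> R) :
  \sum_(x <- s) F x < 0 -> exists2 x, x \in s & F x < 0.
Proof.
elim: s => [|y s IH]; first by rewrite big_nil ltxx.
rewrite big_cons => h.
have [hy|hy] := ltP (F y) 0; first by exists y; rewrite ?mem_head.
have [|x xs hx] := IH; first by lra.
by exists x; rewrite // in_cons xs orbT.
Qed.

Lemma scal_combine (c t x y z w : R) : c ^+ 2 * (1 + t ^+ 2) = 1 ->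
  c * (x + t * y) * (c * (z + t * w)) + c * (y - t * x) * (c * (w - t * z)) = x * z + y * w.
Proof.
move=> hc.
have e : c * (x + t * y) * (c * (z + t * w)) + c * (y - t * x) * (c * (w - t * z)) - (x * z + y * w)
   = (c ^+ 2 * (1 + t ^+ 2) - 1) * (x * z + y * w) by ring.
by apply/eqP; rewrite -subr_eq0 e hc subrr mul0r.
Qed.

Lemma combine B a b : qf B a > 0 -> qf B b < 0 ->
  exists u v, u *m u^T + v *m v^T = a *m a^T + b *m b^T /\ qf B u = 0.
Proof.
move=> ha hb.
set qa := qf B a; set qb := qf B b.
set be := (bf B a b + bf B b a) / 2.
set D := be ^+ 2 - qa * qb.
have hab : qa * qb < 0 by rewrite pmulr_rlt0.
have hD : 0 <= D by rewrite /D; have := sqr_ge0 be; lra.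
set s := Num.sqrt D.
have hs : s ^+ 2 = D by rewrite sqr_sqrtr.
have hqb : qb != 0 by rewrite lt_eqF.
set t := (s - be) / qb.
have h1t : 0 < 1 + t ^+ 2 by have := sqr_ge0 t; lra.
set c := (Num.sqrt (1 + t ^+ 2))^-1.
have hc : c ^+ 2 * (1 + t ^+ 2) = 1.
  by rewrite /c exprVn sqr_sqrtr ?mulVf ?gt_eqF // ltW.
exists (c *: (a + t *: b)), (c *: (b - t *: a)); split.
  apply/matrixP => i j; rewrite !(oprodE, mxE); exact: scal_combine.
rewrite /qf bfZl bfZr !bfDl !bfDr !bfZl !bfZr -/(qf B a) -/(qf B b) -/qa -/qb.
have e : qb * (qa + t * bf B a b + (t * bf B b a + t * (t * qb))) = qa * qb - be ^+ 2 + s ^+ 2.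
  by rewrite /t /be; field.
have : qa + t * bf B a b + (t * bf B b a + t * (t * qb)) = 0.
  have e2 : qb * (qa + t * bf B a b + (t * bf B b a + t * (t * qb))) = 0.
    by rewrite e hs /D; ring.
  by move: e2 => /eqP; rewrite mulf_eq0 (negbTE hqb) /= => /eqP.
by move=> ->; rewrite !mulr0.
Qed.


Lemma qf_oprod_sum B u v a b : u *m u^T + v *m v^T = a *m a^T + b *m b^T ->
  qf B u + qf B v = qf B a + qf B b.
Proof. by move=> h; rewrite !qf_tr -!mxtraceD -!mulmxDr h. Qed.

Lemma yz_k k : forall B (ws : seq 'cV[R]_m), (size ws < k)%N ->
  \sum_(w <- ws) qf B w = 0 ->
  exists ws' : seq 'cV[R]_m, \sum_(w <- ws') w *m w^T = \sum_(w <- ws) w *m w^T /\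
     (forall w, w \in ws' -> qf B w = 0).
Proof.
elim: k => [//|k IH] B [|w rest] hsz hsum.
  by exists [::]; split => // w; rewrite in_nil.
rewrite big_cons in hsum.
have [hw0|hwn] := eqVneq (qf B w) 0.
  have hs' : \sum_(x <- rest) qf B x = 0 by rewrite hw0 add0r in hsum.
  have [L [hL1 hL2]] := IH B rest hsz hs'.
  exists (w :: L); split; first by rewrite !big_cons hL1.
  by move=> x; rewrite in_cons => /orP[/eqP->|]; [|exact: hL2].
wlog hpos : B hsum hwn / 0 < qf B w.
  move=> Hw; have [hp|hn] := ltP 0 (qf B w); first exact: Hw.
  have [L [hL1 hL2]] : exists L : seq 'cV[R]_m, \sum_(w <- L) w *m w^T = \sum_(w0 <- w :: rest) w0 *m w0^T /\
     (forall x, x \in L -> qf (- B) x = 0).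
    apply: Hw.
    - under eq_bigr do rewrite qfN.
      by rewrite sumrN qfN -opprD hsum oppr0.
    - by rewrite qfN oppr_eq0.
    - by rewrite qfN oppr_gt0 lt_neqAle hwn.
  exists L; split => // x /hL2 /eqP; rewrite qfN oppr_eq0; exact: eqP.
have hrest : \sum_(x <- rest) qf B x < 0 by lra.
have [b hb hbneg] := sum_neg_ex hrest.
have [u [v [huv hu]]] := combine hpos hbneg.
have hqv : qf B v = qf B w + qf B b by rewrite -(qf_oprod_sum B huv) hu add0r.
have hrem := big_rem b hb (P := xpredT) (F := fun x => qf B x) (op := +%R) (idx := 0).
have hrem2 := big_rem b hb (P := xpredT) (F := fun x => x *m x^T) (op := +%R) (idx := 0).
have hsz' : (size (v :: rem b rest) < k)%N.
  have hp : (0 < size rest)%N by move: hb; case: (rest).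
  by rewrite /= size_rem // prednK //; move: hsz; rewrite /= ltnS.
have hsum' : \sum_(x <- v :: rem b rest) qf B x = 0.
  by rewrite big_cons hqv; move: hsum; rewrite hrem /=; lra.
have [L [hL1 hL2]] := IH B (v :: rem b rest) hsz' hsum'.
exists (u :: L); split.
  by rewrite !big_cons hL1 big_cons addrA huv hrem2 /= !addrA.
by move=> x; rewrite in_cons => /orP[/eqP->|]; [|exact: hL2].
Qed.

Lemma yz B (ws : seq 'cV[R]_m) : \sum_(w <- ws) qf B w = 0 ->
  exists ws' : seq 'cV[R]_m, \sum_(w <- ws') w *m w^T = \sum_(w <- ws) w *m w^T /\
     (forall w, w \in ws' -> qf B w = 0).
Proof. exact: (@yz_k (size ws).+1). Qed.

End YZ.


Section Topo.
Variable R : realType.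
Variable m : nat.
Implicit Types (S : set 'M[R]_m) (X Y Z M : 'M[R]_m).

Definition approx S X := forall e : R, 0 < e -> exists Z, S Z /\ `|X - Z| < e.

Lemma closure_approx S X : closure S X <-> approx S X.
Proof.
split.
  move=> hc e he.
  have [Z [hZ hb]] := hc _ (nbhsx_ballx X e he).
  by exists Z; split => //; move: hb; rewrite -ball_normE.
move=> ha B /nbhs_ballP [e /= he hB].
have [Z [hZ hZe]] := ha e he.
by exists Z; split => //; apply: hB; rewrite -ball_normE.
Qed.

Lemma entry_le M i j : `|M i j| <= `|M|.
Proof. rewrite [leRHS]/Num.Def.normr /= mx_normrE. apply/bigmax_geP; right; exists (i,j) => //. Qed.

Definition lin (C M : 'M[R]_m) : R := \sum_i \sum_j C i j * M i j.

Lemma lin_bound C M : `|lin C M| <= (\sum_i \sum_j `|C i j|) * `|M|.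
Proof.
rewrite /lin mulr_suml; apply: (le_trans (ler_norm_sum _ _ _)); apply: ler_sum => i _.
rewrite mulr_suml; apply: (le_trans (ler_norm_sum _ _ _)); apply: ler_sum => j _.
by rewrite normrM ler_wpM2l ?entry_le.
Qed.

Lemma linB C X Y : lin C (X - Y) = lin C X - lin C Y.
Proof.
rewrite /lin -sumrB; apply: eq_bigr => i _; rewrite -sumrB; apply: eq_bigr => j _.
by rewrite !mxE mulrBr.
Qed.

Lemma approx_ge S X C (a : R) : approx S X -> (forall Z, S Z -> a <= lin C Z) -> a <= lin C X.
Proof.
move=> hX hS; rewrite leNgt; apply/negP => hlt.
set K := \sum_i \sum_j `|C i j|.
have hK : 0 <= K by apply: sumr_ge0 => i _; apply: sumr_ge0 => j _.
have he : 0 < (a - lin C X) / (K + 1) by rewrite divr_gt0 // ?subr_gt0 //; lra.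
have [Z [hZ hZX]] := hX _ he.
have h1 := hS Z hZ.
have h2 := lin_bound C (X - Z); rewrite linB -/K in h2.
have h3 : K * `|X - Z| <= K * ((a - lin C X) / (K + 1)) by rewrite ler_wpM2l // ltW.
have h4 : K * ((a - lin C X) / (K + 1)) < a - lin C X.
  rewrite mulrA ltr_pdivrMr; last by lra.
  by rewrite mulrC ltr_pM2l ?subr_gt0 //; lra.
have h6 : lin C Z - lin C X <= `|lin C X - lin C Z|.
  by rewrite -normrN opprB ler_norm.
lra.
Qed.

Lemma approx_le S X C (a : R) : approx S X -> (forall Z, S Z -> lin C Z <= a) -> lin C X <= a.
Proof.
move=> hX hS.
have e : forall Z, lin (- C) Z = - lin C Z.
  by move=> Z; rewrite /lin -sumrN; apply: eq_bigr => i _; rewrite -sumrN; apply: eq_bigr => j _; rewrite mxE mulNr.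
have := @approx_ge S X (- C) (- a) hX; rewrite e lerN2; apply => Z /hS; by rewrite e lerN2.
Qed.

Lemma approx_eq S X C (a : R) : approx S X -> (forall Z, S Z -> lin C Z = a) -> lin C X = a.
Proof.
move=> hX hS; apply: le_anti; apply/andP; split;
  [apply: (approx_le hX) | apply: (approx_ge hX)] => Z /hS -> //.
Qed.

Lemma lin_entry i j M : lin (delta_mx i j) M = M i j.
Proof.
rewrite /lin (bigD1 i) //= (bigD1 j) //= big1 => [|k hk]; last by rewrite mxE eqxx (negbTE hk) mul0r.
rewrite big1 => [|k hk]; last first.
  by apply: big1 => l _; rewrite mxE (negbTE hk) mul0r.
by rewrite mxE !eqxx mul1r !addr0.
Qed.

Lemma lin_bf M a b : bf M a b = lin (a *m b^T) M.
Proof.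
rewrite bfE /lin; apply: eq_bigr => i _; apply: eq_bigr => j _.
by rewrite mxE big_ord1 mxE; ring.
Qed.

Lemma lin_tr A M : \tr (A^T *m M) = lin A M.
Proof.
rewrite /lin /mxtrace exchange_big; apply: eq_bigr => i _; rewrite mxE.
by apply: eq_bigr => j _; rewrite mxE.
Qed.


End Topo.

Section PsdMore.
Variable R : realType.
Variable m : nat.
Implicit Types (S : set 'M[R]_m) (X Y Z M : 'M[R]_m) (w x : 'cV[R]_m).

Lemma psd0 : psd (0 : 'M[R]_m).
Proof.
split; first by rewrite trmx0.
by move=> x; rewrite mulmx0 mul0mx mxE.
Qed.

Lemma psdD X Y : psd X -> psd Y -> psd (X + Y).
Proof.
move=> [hX qX] [hY qY]; split; first by rewrite linearD /= hX hY.
move=> x; rewrite -/(bf _ x x) bfD_mx; exact: addr_ge0 (qX x) (qY x).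
Qed.

Lemma psdZ k X : 0 <= k -> psd X -> psd (k *: X).
Proof.
move=> hk [hX qX]; split; first by rewrite linearZ /= hX.
move=> x; rewrite -/(bf _ x x) bfZ_mx; exact: mulr_ge0 hk (qX x).
Qed.

Lemma psd_oprod w : psd (w *m w^T).
Proof.
split; first by rewrite trmx_mul trmxK.
by move=> x; rewrite -/(bf _ x x) -/(qf _ x) qf_oprod sqr_ge0.
Qed.

Lemma psd_sum (I : Type) (r : seq I) (P : pred I) (F : I -> 'M[R]_m) :
  (forall i, P i -> psd (F i)) -> psd (\sum_(i <- r | P i) F i).
Proof. move=> h; apply: (big_ind (fun X => psd X)) => //; [exact: psd0 | exact: psdD]. Qed.

Lemma linBl C1 C2 M : lin (C1 - C2) M = lin C1 M - lin C2 M.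
Proof.
rewrite /lin -sumrB; apply: eq_bigr => i _; rewrite -sumrB; apply: eq_bigr => j _.
by rewrite !mxE mulrBl.
Qed.

Lemma approx_psd S X : approx S X -> (forall Z, S Z -> psd Z) -> psd X.
Proof.
move=> hX hS; split.
  apply/matrixP => i j; rewrite mxE; apply/eqP; rewrite -subr_eq0; apply/eqP.
  rewrite -!lin_entry -linBl; apply: (approx_eq hX) => Z /hS [hZ _].
  by rewrite linBl !lin_entry -{1}hZ mxE subrr.
move=> x; rewrite -/(bf _ x x) lin_bf; apply: (approx_ge hX) => Z /hS [_ hZ].
by rewrite -lin_bf; exact: hZ.
Qed.

End PsdMore.

Section Conv.
Variable R : realType.
Variable m : nat.
Implicit Types (S : set 'M[R]_m) (X Y Z M P : 'M[R]_m).

Lemma conv_of_seq S (T : eqType) (L : seq T) (wt : T -> R) (Pt : T -> 'M[R]_m) :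
  (forall x, x \in L -> 0 <= wt x) -> \sum_(x <- L) wt x = 1 ->
  (forall x, x \in L -> S (Pt x)) -> conv_hull S (\sum_(x <- L) wt x *: Pt x).
Proof.
case: L => [|x0 L'] hw hs hP; first by move: hs; rewrite big_nil => /eqP; rewrite eq_sym oner_eq0.
set L := x0 :: L'.
exists (size L), (fun i => wt (nth x0 L i)), (fun i => Pt (nth x0 L i)).
split; first by move=> i; apply: hw; rewrite mem_nth.
split; first by rewrite -hs (big_nth x0) big_mkord.
split; first by move=> i; apply: hP; rewrite mem_nth.
by rewrite (big_nth x0) big_mkord.
Qed.

Lemma widen_liftE k (j : 'I_k) (h : (k <= k.+1)%N) : widen_ord h j = lift ord_max j.
Proof. by apply: val_inj; rewrite /= /bump leqNgt ltn_ord. Qed.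

Lemma conv_mix S Z P mu : conv_hull S Z -> S P -> 0 <= mu <= 1 ->
  conv_hull S ((1 - mu) *: Z + mu *: P).
Proof.
move=> [k [w [Pf [hw [hs [hP ->]]]]]] hSP /andP[hm0 hm1].
exists k.+1, (fun i => match unlift ord_max i with Some j => (1 - mu) * w j | None => mu end),
  (fun i => match unlift ord_max i with Some j => Pf j | None => P end).
split.
  move=> i; case: (unlift ord_max i) => [j|] //; apply: mulr_ge0 => //; lra.
split.
  rewrite big_ord_recr /= unlift_none.
  under eq_bigr => j _ do rewrite widen_liftE liftK.
  by rewrite -mulr_sumr hs mulr1 subrK.
split; first by move=> i; case: (unlift ord_max i).
rewrite big_ord_recr /= unlift_none.
rewrite [in RHS](eq_bigr (fun j => ((1 - mu) * w j) *: Pf j)) => [|j _]; last by rewrite widen_liftE liftK.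
by rewrite scaler_sumr; congr (_ + _); apply: eq_bigr => j _; rewrite scalerA.
Qed.

End Conv.


Section Gen.
Variable R : realType.
Variable m : nat.
Implicit Types (B X Y Z M : 'M[R]_m) (w x v : 'cV[R]_m).

Lemma frobD B X Y : frob B (X + Y) = frob B X + frob B Y.
Proof. by rewrite /frob mulmxDr mxtraceD. Qed.
Lemma frob0 B : frob B 0 = 0.
Proof. by rewrite /frob mulmx0 mxtrace0. Qed.
Lemma frobZ B k X : frob B (k *: X) = k * frob B X.
Proof. by rewrite /frob -scalemxAr mxtraceZ. Qed.
Lemma frobB B X Y : frob B (X - Y) = frob B X - frob B Y.
Proof. by rewrite frobD -scaleN1r frobZ mulN1r. Qed.
Lemma frob_sum B (I : Type) (r : seq I) (P : pred I) (F : I -> 'M[R]_m) :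
  frob B (\sum_(i <- r | P i) F i) = \sum_(i <- r | P i) frob B (F i).
Proof. exact: (big_morph (frob B) (frobD B) (frob0 B)). Qed.
Lemma frob_oprodE B w : frob B (w *m w^T) = qf B w.
Proof. exact: frob_oprod. Qed.

Lemma sum_nz_ex (T : eqType) (s : seq T) (F : T -> R) :
  \sum_(x <- s) F x != 0 -> exists2 x, x \in s & F x != 0.
Proof.
elim: s => [|y s IH]; first by rewrite big_nil eqxx.
rewrite big_cons => h.
have [hy|hy] := eqVneq (F y) 0; last by exists y; rewrite ?mem_head.
have [|x xs hx] := IH; first by rewrite hy add0r in h.
by exists x; rewrite // in_cons xs orbT.
Qed.

Lemma ip_ev w i : ip w (@ev R _ i) = w i ord0.
Proof. by rewrite /ip /ev -colE !mxE. Qed.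

Lemma qf_delta w (i : 'I_m) : qf (delta_mx i i) w = w i ord0 ^+ 2.
Proof.
have -> : delta_mx i i = @ev R _ i *m (@ev R _ i)^T :> 'M[R]_m by rewrite /ev trmx_delta mul_delta_mx.
by rewrite qf_oprod ip_ev.
Qed.

Lemma entry_sum_oprod (ws : seq 'cV[R]_m) i :
  (\sum_(w <- ws) w *m w^T) i i = \sum_(w <- ws) w i ord0 ^+ 2.
Proof. by rewrite summxE; apply: eq_bigr => w _; rewrite oprodE expr2. Qed.

End Gen.

Section Problem.
Variable R : realType.
Variable n : nat.
Variables (Q1 : 'M[R]_n) (q1 : 'cV[R]_n) (bl bu : \bar R).
Hypothesis hQ : Q1^T = Q1.

Local Notation m := (1 + n)%N.
Local Notation A := (A1mx Q1 q1).
Local Notation C := (Cset Q1 q1 bl bu).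
Local Notation Cr := (Crel Q1 q1 bl bu).
Implicit Types (B X Y Z M : 'M[R]_m) (w x v : 'cV[R]_m).

Lemma A_sym : A^T = A.
Proof.
rewrite /A1mx tr_block_mx trmx0 hQ !linearZ /= trmxK //.
Qed.

Lemma decompA X : psd X -> X ord0 ord0 = 1 ->
  exists ws : seq 'cV[R]_m, X = \sum_(w <- ws) w *m w^T /\
    forall w, w \in ws -> qf A w = frob A X * w ord0 ord0 ^+ 2.
Proof.
move=> hX h00.
have [ws0 hws0] := psd_decomp hX.
set c := frob A X.
set B := A - c *: delta_mx ord0 ord0.
have hqB : forall w, qf B w = qf A w - c * w ord0 ord0 ^+ 2.
  by move=> w; rewrite /qf /B bfB_mx bfZ_mx; congr (_ - _ * _); exact: (qf_delta w ord0).
have hsum : \sum_(w <- ws0) qf B w = 0.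
  under eq_bigr do rewrite hqB.
  rewrite sumrB -mulr_sumr -entry_sum_oprod -hws0 h00 mulr1.
  rewrite /c {1}hws0 frob_sum; apply/eqP; rewrite subr_eq0; apply/eqP.
  by apply: eq_bigr => i _; rewrite frob_oprodE.
have [ws [h1 h2]] := yz hsum.
exists ws; split; first by rewrite h1.
by move=> w /h2; rewrite hqB => /eqP; rewrite subr_eq0 => /eqP.
Qed.

Lemma crel_of X Y : Cr X -> psd Y -> Y ord0 ord0 = 1 -> frob A Y = frob A X -> Cr Y.
Proof. by move=> [_ [_ [h1 h2]]] hY h00 hf; split => //; rewrite hf. Qed.

Lemma rank_oprod w : (\rank (w *m w^T) <= 1)%N.
Proof. exact: leq_trans (mxrankM_maxl _ _) (rank_leq_col w). Qed.

Lemma part1 X : extreme_point Cr X -> C X.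
Proof.
move=> [hC hext]; have [hX [h00 [hl hu]]] := hC.
have [ws [hws hq]] := decompA hX h00.
set c := frob A X.
have hs1 : \sum_(w <- ws) w ord0 ord0 ^+ 2 = 1 by rewrite -entry_sum_oprod -hws.
have [w hw hw0] : exists2 w, w \in ws & w ord0 ord0 ^+ 2 != 0.
  by apply: sum_nz_ex; rewrite hs1 oner_neq0.
set a := w ord0 ord0.
have ha : a != 0 by move: hw0; rewrite expf_eq0.
set s := a ^+ 2.
have hs0 : 0 < s by rewrite lt0r hw0 sqr_ge0.
have hrem := big_rem w hw (P := xpredT) (F := fun x => x ord0 ord0 ^+ 2) (op := +%R) (idx := 0).
rewrite /= -/a -/s in hrem.
have hremM := big_rem w hw (P := xpredT) (F := fun x => x *m x^T) (op := +%R) (idx := 0).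
have hrest : 0 <= \sum_(x <- rem w ws) x ord0 ord0 ^+ 2 by apply: sumr_ge0 => x _; apply: sqr_ge0.
have hs_le : s <= 1 by rewrite -hs1 hrem /=; lra.
set v := a^-1 *: w.
set Y := v *m v^T.
have hYw : Y = s^-1 *: (w *m w^T).
  by rewrite /Y /v linearZ /= -scalemxAl -scalemxAr scalerA /s expr2 invfM.
have hY00 : Y ord0 ord0 = 1 by rewrite /Y oprodE /v mxE -expr2 exprMn exprVn mulVf // expf_neq0.
have hYf : frob A Y = c.
  rewrite /Y frob_oprodE /qf /v bfZl bfZr -/(qf A w) hq // -/c -/a; by field.
have hCY : Cr Y.
  by apply: (crel_of hC (psd_oprod _) hY00); rewrite hYf.
set t := s / 2.
have ht0 : 0 < t by rewrite /t; lra.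
have ht1 : t < 1 by rewrite /t; lra.
have h1t : 1 - t != 0 by rewrite subr_eq0 eq_sym lt_eqF.
set Z := (1 - t)^-1 *: (X - t *: Y).
have hXY : X - t *: Y = 2^-1 *: (w *m w^T) + \sum_(x <- rem w ws) x *m x^T.
  rewrite hYw scalerA /t {1}hws hremM /=.
  have -> : s / 2 * s^-1 = 2^-1 by field; rewrite gt_eqF.
  set N := \sum_(x <- rem w ws) x *m x^T.
  by rewrite addrAC -{1}[w *m w^T]scale1r -scalerBl; congr (_ + _); congr (_ *: _); field.
have hZpsd : psd Z.
  apply: psdZ; first by rewrite invr_ge0; lra.
  rewrite hXY; apply: psdD; first by apply: psdZ; [lra | exact: psd_oprod].
  by apply: psd_sum => x _; exact: psd_oprod.
have hZ00 : Z ord0 ord0 = 1.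
  by rewrite /Z [LHS]mxE mxsubE [(t *: Y) _ _]mxE hY00 h00 mulr1; apply: mulVf.
have hZf : frob A Z = c.
  by rewrite /Z frobZ frobB frobZ hYf -/c; field.
have hCZ : Cr Z by apply: crel_of hC hZpsd hZ00 _; rewrite hZf.
have hXe : X = t *: Y + (1 - t) *: Z.
  by rewrite /Z scalerA mulfV // scale1r addrC subrK.
have [hYX _] := hext Y Z t hCY hCZ ht0 ht1 hXe.
split => //; split; last by [].
by rewrite -hYX; exact: rank_oprod.
Qed.

End Problem.


Section Scalar.
Variable R : realType.

Lemma quad_root (a b c : R) : a != 0 -> a * c < 0 ->
  exists r, a * r ^+ 2 + b * r + c = 0 /\ r ^+ 2 <= - c / a.
Proof.
move=> ha hac.
set D := b ^+ 2 - 4 * a * c.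
have hD : 0 <= D by rewrite /D; have := sqr_ge0 b; lra.
set q := Num.sqrt D.
have hq : q ^+ 2 = D by rewrite sqr_sqrtr.
set r1 := (- b + q) / (2 * a).
set r2 := (- b - q) / (2 * a).
have h2a : 2 * a != 0 by rewrite mulf_neq0 // pnatr_eq0.
have hr1 : a * r1 ^+ 2 + b * r1 + c = 0.
  have e : 4 * a * (a * r1 ^+ 2 + b * r1 + c) = q ^+ 2 - D by rewrite /r1 /D; field.
  by move: e; rewrite hq subrr => /eqP; rewrite mulf_eq0 mulf_eq0 (negbTE ha) pnatr_eq0 /= => /eqP.
have hr2 : a * r2 ^+ 2 + b * r2 + c = 0.
  have e : 4 * a * (a * r2 ^+ 2 + b * r2 + c) = q ^+ 2 - D by rewrite /r2 /D; field.
  by move: e; rewrite hq subrr => /eqP; rewrite mulf_eq0 mulf_eq0 (negbTE ha) pnatr_eq0 /= => /eqP.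
have hprod : r1 * r2 = c / a.
  have e : (r1 * r2) * (4 * a ^+ 2) = b ^+ 2 - q ^+ 2 by rewrite /r1 /r2; field.
  have ha2 : 4 * a ^+ 2 != 0 by rewrite mulf_neq0 ?pnatr_eq0 ?expf_neq0.
  by apply: (mulIf ha2); rewrite e hq /D; field.
set k := - c / a.
have hk : 0 < k.
  have ek : k = - (a * c) / a ^+ 2 by rewrite /k; field.
  have ha2p : 0 < a ^+ 2 by rewrite lt0r sqrf_eq0 ha sqr_ge0.
  by rewrite ek divr_gt0 //; lra.
have hk2 : r1 ^+ 2 * r2 ^+ 2 = k ^+ 2 by rewrite -exprMn hprod /k mulNr sqrrN.
have [h1|h1] := leP (r1 ^+ 2) k; first by exists r1.
exists r2; split => //.
have h0 : 0 <= r2 ^+ 2 by apply: sqr_ge0.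
rewrite leNgt; apply/negP => h3.
have : k ^+ 2 < r1 ^+ 2 * r2 ^+ 2.
  by rewrite expr2; apply: ltr_pM; lra.
by rewrite hk2 ltxx.
Qed.


Lemma normK (x : R) : `|x| ^+ 2 = x ^+ 2.
Proof. exact: real_normK (num_real x). Qed.

Lemma root2 (a G Bb H d : R) : a != 0 -> 0 < d ->
  exists sg rh : R, [/\ sg != 0, `|sg| <= d, `|rh| <= d &
    sg^-1 * G + rh / sg * Bb + sg^-1 * (rh / sg) * H + (rh / sg) ^+ 2 * a = 0].
Proof.
move=> ha hd.
have [G0|hG] := eqVneq G 0.
  exists d, 0; split; rewrite ?normr0 ?gt_eqF ?ger0_norm ?(ltW hd) //.
  by rewrite G0; ring.
have haG : 0 < `|a * G| by rewrite normr_gt0 mulf_neq0.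
have hGn : 0 < `|G| by rewrite normr_gt0.
have han : 0 < `|a| by rewrite normr_gt0.
set g := `|G| / `|a|.
have hg : 0 < g by rewrite divr_gt0.
set T := d^-1 + g / d ^+ 2.
have hd2 : 0 < d ^+ 2 by rewrite exprn_gt0.
have hT1 : d^-1 <= T by rewrite /T lerDl divr_ge0 // ltW.
have hT2 : g / d ^+ 2 <= T by rewrite /T lerDr invr_ge0 ltW.
have hT : 0 < T by apply: lt_le_trans hT1; rewrite invr_gt0.
set s := - T * (a * G) / `|a * G|.
have hs : `|s| = T.
  rewrite /s normrM normfV normrM normrN (gtr0_norm hT) normr_id; field.
  by rewrite gt_eqF.
have hs0 : s != 0 by rewrite -normr_eq0 hs gt_eqF.
have hasG : a * (s * G) = - T * `|a * G|.
  have e : a * (s * G) = - T * (a * G) ^+ 2 / `|a * G| by rewrite /s; field; rewrite gt_eqF.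
  by rewrite e -normK; field; rewrite gt_eqF.
have hneg : a * (s * G) < 0 by rewrite hasG mulNr oppr_lt0 mulr_gt0.
have [r [hr1 hr2]] := quad_root (Bb + s * H) ha hneg.
exists s^-1, (r / s); split.
- by rewrite invr_eq0.
- rewrite normfV hs -(invrK d) lef_pV2 ?posrE ?invr_gt0 //.
- have e1 : - (s * G) / a = T * g.
    have e0 : - (s * G) / a = - (a * (s * G)) / a ^+ 2 by field.
    rewrite e0 hasG /g normrM -(normK a); field; rewrite gt_eqF //.
  have h1 : r ^+ 2 <= T * g by rewrite -e1.
  have h2 : g <= T * d ^+ 2 by rewrite -ler_pdivrMr.
  have h3 : T * g <= T * (T * d ^+ 2) by rewrite ler_wpM2l // ltW.
  have hrho2 : (r / s) ^+ 2 <= d ^+ 2.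
    rewrite expr_div_n -(normK s) hs ler_pdivrMr ?exprn_gt0 //.
    move: h1 h3; rewrite !expr2; lra.
  rewrite leNgt; apply/negP => hlt.
  have : d * d < `|r / s| * `|r / s| by apply: ltr_pM => //; apply: ltW.
  by move: hrho2; rewrite -(normK (r / s)) !expr2; lra.
- have e : r / s * s = r by rewrite mulfVK.
  by rewrite invrK e -hr1; ring.
Qed.

End Scalar.


Section Gen2.
Variable R : realType.
Variable m : nat.
Implicit Types (M : 'M[R]_m).

Lemma outerE (a b : 'cV[R]_m) i j : (a *m b^T) i j = a i ord0 * b j ord0.
Proof. by rewrite mxE big_ord1 mxE. Qed.

Lemma norm5 (a1 a2 a3 a4 a5 d : R) M1 M2 M3 M4 M5 :
  `|a1| <= d -> `|a2| <= d -> `|a3| <= d -> `|a4| <= d -> `|a5| <= d ->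
  `|a1 *: M1 + a2 *: M2 + a3 *: M3 + a4 *: M4 + a5 *: M5| <=
    d * (`|M1| + `|M2| + `|M3| + `|M4| + `|M5|).
Proof.
move=> h1 h2 h3 h4 h5.
have g : forall (a : R) M, `|a| <= d -> `|a *: M| <= d * `|M|.
  by move=> a M ha; rewrite normrZ ler_wpM2r.
rewrite !mulrDr.
apply: (le_trans (ler_normD _ _)); apply: lerD; last exact: g.
apply: (le_trans (ler_normD _ _)); apply: lerD; last exact: g.
apply: (le_trans (ler_normD _ _)); apply: lerD; last exact: g.
apply: (le_trans (ler_normD _ _)); apply: lerD; exact: g.
Qed.

End Gen2.

Section Problem2.
Variable R : realType.
Variable n : nat.
Variables (Q1 : 'M[R]_n) (q1 : 'cV[R]_n) (bl bu : \bar R).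
Hypothesis hQ : Q1^T = Q1.

Local Notation m := (1 + n)%N.
Local Notation A := (A1mx Q1 q1).
Local Notation C := (Cset Q1 q1 bl bu).
Local Notation Cr := (Crel Q1 q1 bl bu).
Implicit Types (B X Y Z M : 'M[R]_m) (w x v u e p : 'cV[R]_m).

Lemma ev_rshift0 (k : 'I_n) : (@ev R m (rshift 1 k)) ord0 ord0 = 0.
Proof.
rewrite /ev mxE (_ : (ord0 == rshift 1 k) = false) //.
Qed.

Lemma exists_e : Q1 != 0 -> exists e : 'cV[R]_m, e ord0 ord0 = 0 /\ qf A e != 0.
Proof.
move=> hQ1.
have [i [j hij]] : exists i j, Q1 i j != 0.
  case/boolP: [exists i, [exists j, Q1 i j != 0]] => [/existsP[i /existsP[j h]]|h].
    by exists i, j.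
  exfalso; move/eqP: hQ1; apply; apply/matrixP => i j; rewrite mxE; apply/eqP.
  by move: h; rewrite negb_exists => /forallP/(_ i); rewrite negb_exists => /forallP/(_ j); rewrite negbK.
have hA : forall a b, A (rshift 1 a) (rshift 1 b) = Q1 a b by move=> a b; rewrite block_mxEdr.
have hAs : forall a b, A a b = A b a by move=> a b; rewrite -{1}(A_sym q1 hQ) mxE.
have [hi|hi] := eqVneq (Q1 i i) 0; last first.
  by exists (@ev R m (rshift 1 i)); rewrite ev_rshift0 /qf bf_ev hA.
have [hj|hj] := eqVneq (Q1 j j) 0; last first.
  by exists (@ev R m (rshift 1 j)); rewrite ev_rshift0 /qf bf_ev hA.
exists (@ev R m (rshift 1 i) + @ev R m (rshift 1 j)); split.
  by rewrite mxE !ev_rshift0 addr0.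
have hQs : Q1 j i = Q1 i j by rewrite -{2}hQ mxE.
rewrite /qf !bfDl !bfDr !bf_ev !hA hi hj hQs add0r addr0.
by rewrite -mulr2n mulrn_eq0 negb_or hij.
Qed.

Lemma qf_expand B u w e (s r : R) :
  qf B (u + s *: w + r *: e) = qf B u + s * (bf B u w + bf B w u) + r * (bf B u e + bf B e u)
    + s * r * (bf B w e + bf B e w) + r ^+ 2 * qf B e + s ^+ 2 * qf B w.
Proof. by rewrite /qf !bfDl !bfDr !bfZl !bfZr; ring. Qed.

Lemma C_oprod p u : C (u *m u^T) -> p ord0 ord0 = 1 -> qf A p = qf A u -> C (p *m p^T).
Proof.
move=> [_ [_ [_ [hl hu]]]] hp0 hq; split; first exact: psd_oprod.
split; first exact: rank_oprod.
split; first by rewrite oprodE hp0 mulr1.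
by rewrite frob_oprodE hq -frob_oprodE.
Qed.

Lemma keyR e Z u w : e ord0 ord0 = 0 -> qf A e != 0 -> conv_hull C Z ->
  C (u *m u^T) -> u ord0 ord0 = 1 -> w ord0 ord0 = 0 -> qf A w = 0 ->
  approx (conv_hull C) (Z + w *m w^T).
Proof.
move=> he0 hea hZ hu hu0 hw0 hqw eps heps.
set M1 := u *m u^T - Z.
set M2 := u *m w^T + w *m u^T.
set M3 := u *m e^T + e *m u^T.
set M4 := w *m e^T + e *m w^T.
set M5 := e *m e^T.
set K := `|M1| + `|M2| + `|M3| + `|M4| + `|M5|.
have hK : 0 <= K by rewrite /K !addr_ge0.
have hK1 : 0 < K + 1 by lra.
set d := Num.min 1 (eps / (K + 1)).
have hd0 : 0 < d by rewrite /d lt_min ltr01 divr_gt0.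
have hd1 : d <= 1 by rewrite /d ge_min lexx.
have hd2 : d <= eps / (K + 1) by rewrite /d ge_min lexx orbT.
have hdK : d * K < eps.
  have : d * K <= eps / (K + 1) * K by rewrite ler_wpM2r.
  have : eps / (K + 1) * K < eps.
    by rewrite mulrAC ltr_pdivrMr // ltr_pM2l //; lra.
  lra.
have [sg [rh [hsg hsgd hrhd hroot]]] :=
  root2 (bf A u w + bf A w u) (bf A u e + bf A e u) (bf A w e + bf A e w) hea hd0.
set p := u + sg^-1 *: w + (rh / sg) *: e.
have hqp : qf A p = qf A u.
  rewrite /p qf_expand hqw mulr0 addr0.
  by rewrite -[RHS]addr0 -hroot; ring.
have hp0 : p ord0 ord0 = 1 by rewrite /p !mxE hu0 hw0 he0; ring.
have hCp := C_oprod hu hp0 hqp.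
set mu := sg ^+ 2.
have hmu : 0 <= mu <= 1.
  rewrite /mu sqr_ge0 /= -(normK sg) expr2.
  have := normr_ge0 sg; nra.
exists ((1 - mu) *: Z + mu *: (p *m p^T)); split; first exact: conv_mix.
have eE : Z + w *m w^T - ((1 - mu) *: Z + mu *: (p *m p^T)) =
    - (sg ^+ 2 *: M1 + sg *: M2 + (rh * sg) *: M3 + rh *: M4 + rh ^+ 2 *: M5).
  rewrite /M1 /M2 /M3 /M4 /M5 /p /mu; apply/matrixP => i j; rewrite !(outerE, mxE).
  by field.
rewrite eE normrN.
apply: le_lt_trans hdK.
apply: norm5.
- by rewrite normrX expr2; apply: le_trans (ler_wpM2l _ hsgd) _; rewrite ?normr_ge0 //; nra.
- exact: hsgd.
- rewrite normrM; apply: le_trans (ler_wpM2l _ hsgd) _; rewrite ?normr_ge0 //; nra.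
- exact: hrhd.
- by rewrite normrX expr2; apply: le_trans (ler_wpM2l _ hrhd) _; rewrite ?normr_ge0 //; nra.
Qed.

End Problem2.


Section Problem3.
Variable R : realType.
Variable n : nat.
Variables (Q1 : 'M[R]_n) (q1 : 'cV[R]_n) (bl bu : \bar R).
Hypothesis hQ : Q1^T = Q1.

Local Notation m := (1 + n)%N.
Local Notation A := (A1mx Q1 q1).
Local Notation C := (Cset Q1 q1 bl bu).
Local Notation Cr := (Crel Q1 q1 bl bu).
Implicit Types (B X Y Z M T : 'M[R]_m) (w x v u e p : 'cV[R]_m).

Lemma conv_crel (l r : R) Z : bl = l%:E -> bu = r%:E -> conv_hull C Z -> Cr Z.
Proof.
move=> hbl hbu [k [w [P [hw [hs [hP ->]]]]]].
split; first by apply: psd_sum => i _; apply: psdZ => //; case: (hP i).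
split.
  rewrite summxE -hs; apply: eq_bigr => i _; rewrite mxE.
  by have [_ [_ [-> _]]] := hP i; rewrite mulr1.
rewrite frob_sum hbl hbu !lee_fin.
under eq_bigr do rewrite frobZ.
split.
  rewrite -[l]mul1r -hs mulr_suml; apply: ler_sum => i _; apply: ler_wpM2l => //.
  by have [_ [_ [_ [+ _]]]] := hP i; rewrite hbl lee_fin.
rewrite -[r]mul1r -hs mulr_suml; apply: ler_sum => i _; apply: ler_wpM2l => //.
by have [_ [_ [_ [_ +]]]] := hP i; rewrite hbu lee_fin.
Qed.

Lemma part2a X : bl \is a fin_num -> bu \is a fin_num -> closure (conv_hull C) X -> Cr X.
Proof.
move=> hbl hbu /closure_approx hX.
have ebl : bl = (fine bl)%:E by rewrite fineK.
have ebu : bu = (fine bu)%:E by rewrite fineK.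
have hS := conv_crel ebl ebu.
split; first by apply: (approx_psd hX) => Z /hS [].
split.
  rewrite -lin_entry; apply: (approx_eq hX) => Z /hS [_ [h _]].
  by rewrite lin_entry.
rewrite {1}ebl {1}ebu !lee_fin /frob lin_tr; split.
  apply: (approx_ge hX) => Z /hS [_ [_ [h _]]]; move: h.
  by rewrite {1}ebl lee_fin /frob lin_tr.
apply: (approx_le hX) => Z /hS [_ [_ [_ h]]]; move: h.
by rewrite {1}ebu lee_fin /frob lin_tr.
Qed.

Lemma approx_conv Z : conv_hull C Z -> approx (conv_hull C) Z.
Proof. by move=> hZ eps he; exists Z; split => //; rewrite subrr normr0. Qed.

Lemma approx_rec e u T w : e ord0 ord0 = 0 -> qf A e != 0 ->
  C (u *m u^T) -> u ord0 ord0 = 1 -> approx (conv_hull C) T ->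
  w ord0 ord0 = 0 -> qf A w = 0 -> approx (conv_hull C) (T + w *m w^T).
Proof.
move=> he0 hea hu hu0 hT hw0 hqw eps heps.
have he2 : 0 < eps / 2 by rewrite divr_gt0.
have [Z [hZ hTZ]] := hT _ he2.
have [W [hW hZW]] := keyR he0 hea hZ hu hu0 hw0 hqw he2.
exists W; split => //.
have -> : T + w *m w^T - W = (T - Z) + (Z + w *m w^T - W) by rewrite !addrA subrK.
apply: (le_lt_trans (ler_normD _ _)); lra.
Qed.

Lemma part2b X : Q1 != 0 -> Cr X -> closure (conv_hull C) X.
Proof.
move=> hQ1 hC; have [hX [h00 [hl hu]]] := hC.
have [e [he0 hea]] := exists_e q1 hQ hQ1.
have [ws [hws hq]] := decompA Q1 q1 hX h00.
set c := frob A X.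
set pp := fun w : 'cV[R]_m => w ord0 ord0 != 0.
set Pt := fun x : 'cV[R]_m => ((x ord0 ord0)^-1 *: x) *m ((x ord0 ord0)^-1 *: x)^T.
have hCP : forall x, x \in ws -> pp x -> C (Pt x).
  move=> x hx hpx; split; first exact: psd_oprod.
  split; first exact: rank_oprod.
  split; first by rewrite /Pt oprodE mxE -expr2 exprMn exprVn mulVf // expf_neq0.
  rewrite /Pt frob_oprodE /qf bfZl bfZr -/(qf A x) hq // -/c.
  have -> : (x ord0 ord0)^-1 * ((x ord0 ord0)^-1 * (c * x ord0 ord0 ^+ 2)) = c by field.
  by [].
have hPt : forall x, pp x -> x ord0 ord0 ^+ 2 *: Pt x = x *m x^T.
  move=> x hpx; rewrite /Pt linearZ /= -scalemxAl -scalemxAr !scalerA.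
  have -> : x ord0 ord0 ^+ 2 / x ord0 ord0 / x ord0 ord0 = 1 by field.
  by rewrite scale1r.
have hs1 : \sum_(x <- ws) x ord0 ord0 ^+ 2 = 1 by rewrite -entry_sum_oprod -hws.
have hsP : \sum_(x <- [seq x <- ws | pp x]) x ord0 ord0 ^+ 2 = 1.
  rewrite big_filter -hs1 [in RHS](bigID pp) /= [X in _ = _ + X]big1 ?addr0 //.
  by move=> x; rewrite /pp negbK => /eqP ->; rewrite expr0n.
have hbase : conv_hull C (\sum_(x <- [seq x <- ws | pp x]) x ord0 ord0 ^+ 2 *: Pt x).
  apply: conv_of_seq => //.
    by move=> x _; apply: sqr_ge0.
  by move=> x; rewrite mem_filter => /andP[hpx hx]; apply: hCP.
have [x0 hx0 _] : exists2 x, x \in [seq x <- ws | pp x] & x ord0 ord0 ^+ 2 != 0.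
  by apply: sum_nz_ex; rewrite hsP oner_neq0.
move: hx0; rewrite mem_filter => /andP[hpx0 hx0].
set u := (x0 ord0 ord0)^-1 *: x0.
have hu0 : u ord0 ord0 = 1 by rewrite /u mxE mulVf.
have hCu : C (u *m u^T) by exact: hCP.
have hsplit : X = \sum_(x <- [seq x <- ws | pp x]) x ord0 ord0 ^+ 2 *: Pt x
                 + \sum_(x <- ws | ~~ pp x) x *m x^T.
  rewrite {1}hws (bigID pp) /= big_filter; congr (_ + _).
  by apply: eq_bigr => x hpx; rewrite hPt.
have hrec : forall L : seq 'cV[R]_m, {subset L <= ws} -> forall T, approx (conv_hull C) T ->
    approx (conv_hull C) (T + \sum_(x <- L | ~~ pp x) x *m x^T).
  elim => [|y L IH] hL T hT; first by rewrite big_nil addr0.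
  rewrite big_cons.
  have hL' : {subset L <= ws} by move=> z hz; apply: hL; rewrite in_cons hz orbT.
  case: ifP => hpy; last exact: IH.
  rewrite addrA; apply: IH => //.
  have hy0 : y ord0 ord0 = 0 by move: hpy; rewrite /pp negbK => /eqP.
  apply: (approx_rec he0 hea hCu hu0 hT hy0).
  rewrite hq; last by apply: hL; rewrite mem_head.
  by rewrite hy0 expr0n mulr0.
apply/closure_approx; rewrite hsplit.
by apply: hrec => //; apply: approx_conv.
Qed.

End Problem3.

Theorem corollary6 (R : realType) (n : nat) (Q1 : 'M[R]_n) (q1 : 'cV[R]_n)
  (bl bu : \bar R) :
  Q1^T = Q1 -> (bl <= bu)%E ->
  (forall X : 'M[R]_(1 + n), extreme_point (Crel Q1 q1 bl bu) X -> Cset Q1 q1 bl bu X) /\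
  (Q1 != 0 -> bl \is a fin_num -> bu \is a fin_num ->
     Crel Q1 q1 bl bu = closure (conv_hull (Cset Q1 q1 bl bu))).
Proof.
move=> hQ _; split; first by move=> X; apply: part1.
move=> hQ1 hbl hbu; apply/seteqP; split => X hX.
  exact: part2b.
exact: part2a.
Qed.
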